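(* The theory $\mathsf{Seq}$ is an extension of the theory $\mathsf{WSeq}$: for every $\mathcal{L}$-formula $\phi$, if $\mathsf{WSeq}\vdash\phi$ then $\mathsf{Seq}\vdash\phi$.
   Context: $\mathcal{L}=\{e,\vdash,\circ\}$ with $e$ a constant and $\vdash$ (infix), $\circ$ binary function symbols. $\mathsf{Seq}$ has axioms: ($\mathsf{Seq}_1$) $\forall xy[x\vdash y\neq e]$; ($\mathsf{Seq}_2$) $\forall x_1x_2y_1y_2[x_1\vdash x_2=y_1\vdash y_2\rightarrow(x_1=y_1\wedge x_2=y_2)]$; ($\mathsf{Seq}_3$) $\forall x[x\circ e=x]$; ($\mathsf{Seq}_4$) $\forall xyz[x\circ(y\vdash z)=(x\circ y)\vdash z]$; ($\mathsf{Seq}_5$) $\forall x[x=e\vee\exists yz[x=y\vdash z]]$. Sequences: $()$ is a sequence, and for $n>0$, if $s_1,\ldots,s_n$ are sequences then $(s_1,\ldots,s_n)$ is one. Sequerals: $\overline{()}=e$, $\overline{(s_1,\ldots,s_n)}=(\ldots((e\vdash\overline{s_1})\vdash\overline{s_2})\ldots)\vdash\overline{s_n}$. $x\sqsubseteq t$ abbreviates $\exists y[x\circ y=t]$. $\mathsf{WSeq}$ has axiom schemes: ($\mathsf{WSeq}_1$) $\overline{s}\neq\overline{t}$ for distinct sequences $s,t$; ($\mathsf{WSeq}_2$) $\overline{(s_1,\ldots,s_n)}\circ\overline{(t_1,\ldots,t_m)}=\overline{(s_1,\ldots,s_n,t_1,\ldots,t_m)}$; ($\mathsf{WSeq}_3$)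 $\forall x[x\sqsubseteq\overline{s}\rightarrow\bigvee_{t\in I(s)}x=\overline{t}]$ where $I(s)$ is the set of initial segments of $s$. *)

(* Defs.v *)
From Stdlib Require Import List.
Import ListNotations.

Inductive term : Type :=
| var : nat -> term
| e : term
| turn : term -> term -> term
| comp : term -> term -> term.

Inductive form : Type :=
| Eq : term -> term -> form
| Bot : form
| Imp : form -> form -> form
| And : form -> form -> form
| Or : form -> form -> form
| All : form -> form
| Ex : form -> form.

Definition Not (A : form) : form := Imp A Bot.

Fixpoint tsubst (sigma : nat -> term) (t : term) : term :=
  match t with
  | var n => sigma n
  | e => e
  | turn a b => turn (tsubst sigma a) (tsubst sigma b)
  | comp a b => comp (tsubst sigma a) (tsubst sigma b)
  end.

Definition shift : nat -> term := fun n => var (S n).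

Definition scons (t : term) (sigma : nat -> term) : nat -> term :=
  fun n => match n with 0 => t | S k => sigma k end.

Definition up (sigma : nat -> term) : nat -> term :=
  scons (var 0) (fun n => tsubst shift (sigma n)).

Fixpoint fsubst (sigma : nat -> term) (A : form) : form :=
  match A with
  | Eq s t => Eq (tsubst sigma s) (tsubst sigma t)
  | Bot => Bot
  | Imp A B => Imp (fsubst sigma A) (fsubst sigma B)
  | And A B => And (fsubst sigma A) (fsubst sigma B)
  | Or A B => Or (fsubst sigma A) (fsubst sigma B)
  | All A => All (fsubst (up sigma) A)
  | Ex A => Ex (fsubst (up sigma) A)
  end.

Definition inst (t : term) (A : form) : form := fsubst (scons t var) A.

Inductive nd : list form -> form -> Prop :=
| nd_ax G A : In A G -> nd G A
| nd_impI G A B : nd (A :: G) B -> nd G (Imp A B)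
| nd_impE G A B : nd G (Imp A B) -> nd G A -> nd G B
| nd_botE G A : nd G Bot -> nd G A
| nd_dne G A : nd G (Not (Not A)) -> nd G A
| nd_andI G A B : nd G A -> nd G B -> nd G (And A B)
| nd_andE1 G A B : nd G (And A B) -> nd G A
| nd_andE2 G A B : nd G (And A B) -> nd G B
| nd_orI1 G A B : nd G A -> nd G (Or A B)
| nd_orI2 G A B : nd G B -> nd G (Or A B)
| nd_orE G A B C : nd G (Or A B) -> nd (A :: G) C -> nd (B :: G) C -> nd G C
| nd_allI G A : nd (map (fsubst shift) G) A -> nd G (All A)
| nd_allE G A t : nd G (All A) -> nd G (inst t A)
| nd_exI G A t : nd G (inst t A) -> nd G (Ex A)
| nd_exE G A B : nd G (Ex A) -> nd (A :: map (fsubst shift) G) (fsubst shift B) -> nd G B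
| nd_refl G t : nd G (Eq t t)
| nd_leibniz G A s t : nd G (Eq s t) -> nd G (inst s A) -> nd G (inst t A).

Definition proves (T : form -> Prop) (phi : form) : Prop :=
  exists G : list form, (forall psi, In psi G -> T psi) /\ nd G phi.

Definition Seq1 : form := All (All (Not (Eq (turn (var 1) (var 0)) e))).
Definition Seq2 : form :=
  All (All (All (All
    (Imp (Eq (turn (var 3) (var 2)) (turn (var 1) (var 0)))
         (And (Eq (var 3) (var 1)) (Eq (var 2) (var 0))))))).
Definition Seq3 : form := All (Eq (comp (var 0) e) (var 0)).
Definition Seq4 : form :=
  All (All (All (Eq (comp (var 2) (turn (var 1) (var 0)))
                    (turn (comp (var 2) (var 1)) (var 0))))).
Definition Seq5 : form :=
  All (Or (Eq (var 0) e) (Ex (Ex (Eq (var 2) (turn (var 1) (var 0)))))).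

Definition SeqAx (phi : form) : Prop :=
  phi = Seq1 \/ phi = Seq2 \/ phi = Seq3 \/ phi = Seq4 \/ phi = Seq5.

(* node [] = (), node [s1;...;sn] = (s1,...,sn) *)
Inductive sequence : Type := node : list sequence -> sequence.

Fixpoint numeral (s : sequence) : term :=
  match s with
  | node l =>
      (fix go (acc : term) (l : list sequence) : term :=
         match l with
         | [] => acc
         | x :: r => go (turn acc (numeral x)) r
         end) e l
  end.

Definition init_segs (s : sequence) : list sequence :=
  match s with
  | node l => map (fun k => node (firstn k l)) (seq 0 (S (length l)))
  end.

Definition bigOr (l : list form) : form := fold_right Or Bot l.

Definition WSeq1 (s t : sequence) : form := Not (Eq (numeral s) (numeral t)).
Definition WSeq2 (l1 l2 : list sequence) : form :=
  Eq (comp (numeral (node l1)) (numeral (node l2))) (numeral (node (l1 ++ l2))).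
(* forall x [ (exists y, x o y = s) -> \/_{t in I(s)} x = t ] *)
Definition WSeq3 (s : sequence) : form :=
  All (Imp (Ex (Eq (comp (var 1) (var 0)) (numeral s)))
           (bigOr (map (fun t => Eq (var 0) (numeral t)) (init_segs s)))).

Definition WSeqAx (phi : form) : Prop :=
  (exists s t, s <> t /\ phi = WSeq1 s t) \/
  (exists l1 l2, phi = WSeq2 l1 l2) \/
  (exists s, phi = WSeq3 s).

(* Main.v *)
Require Import Defs.
From Stdlib Require Import List Lia Classical.
Import ListNotations.
Lemma tsubst_comp s t u : tsubst s (tsubst t u) = tsubst (fun n => tsubst s (t n)) u.
Proof. induction u; simpl; congruence. Qed.
Lemma tsubst_ext s t u : (forall n, s n = t n) -> tsubst s u = tsubst t u.
Proof. intro H; induction u; simpl; congruence. Qed.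
Lemma tsubst_var u : tsubst var u = u.
Proof. induction u; simpl; congruence. Qed.
Lemma instsh u s t : tsubst (scons u s) (tsubst shift t) = tsubst s t.
Proof. rewrite tsubst_comp. apply tsubst_ext. reflexivity. Qed.
Lemma upsh s t : tsubst (up s) (tsubst shift t) = tsubst shift (tsubst s t).
Proof. rewrite !tsubst_comp. apply tsubst_ext. reflexivity. Qed.

Ltac norm H := unfold inst in H; simpl in H; repeat rewrite ?upsh, ?instsh, ?tsubst_var in H.

Lemma seq1_inst G a b : In Seq1 G -> nd G (Not (Eq (turn a b) e)).
Proof. intro H. pose proof (nd_allE _ _ b (nd_allE _ _ a (nd_ax _ _ H))) as H1. norm H1. exact H1. Qed.
Lemma seq2_inst G a b c d : In Seq2 G ->
  nd G (Imp (Eq (turn a b) (turn c d)) (And (Eq a c) (Eq b d))).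
Proof.
  intro H. pose proof (nd_allE _ _ d (nd_allE _ _ c (nd_allE _ _ b (nd_allE _ _ a (nd_ax _ _ H))))) as H1.
  norm H1. exact H1.
Qed.
Lemma seq3_inst G a : In Seq3 G -> nd G (Eq (comp a e) a).
Proof. intro H. pose proof (nd_allE _ _ a (nd_ax _ _ H)) as H1. norm H1. exact H1. Qed.
Lemma seq4_inst G a b c : In Seq4 G -> nd G (Eq (comp a (turn b c)) (turn (comp a b) c)).
Proof. intro H. pose proof (nd_allE _ _ c (nd_allE _ _ b (nd_allE _ _ a (nd_ax _ _ H)))) as H1. norm H1. exact H1. Qed.
Lemma seq5_inst G a : In Seq5 G ->
  nd G (Or (Eq a e) (Ex (Ex (Eq (tsubst shift (tsubst shift a)) (turn (var 1) (var 0)))))).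
Proof. intro H. pose proof (nd_allE _ _ a (nd_ax _ _ H)) as H1. norm H1. exact H1. Qed.

Lemma eq_sym G s t : nd G (Eq s t) -> nd G (Eq t s).
Proof. intro H. pose proof (nd_leibniz G (Eq (var 0) (tsubst shift s)) s t H) as H1.
  norm H1. apply H1, nd_refl. Qed.
Lemma eq_trans G a b c : nd G (Eq a b) -> nd G (Eq b c) -> nd G (Eq a c).
Proof. intros H H'. pose proof (nd_leibniz G (Eq (tsubst shift a) (var 0)) b c H') as H1.
  norm H1. auto. Qed.
Lemma cong_turn_l G a b c : nd G (Eq a b) -> nd G (Eq (turn a c) (turn b c)).
Proof. intros H. pose proof (nd_leibniz G (Eq (turn (tsubst shift a) (tsubst shift c)) (turn (var 0) (tsubst shift c))) a b H) as H1.
  norm H1. apply H1, nd_refl. Qed.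
Lemma cong_comp_r G a b c : nd G (Eq a b) -> nd G (Eq (comp c a) (comp c b)).
Proof. intros H. pose proof (nd_leibniz G (Eq (comp (tsubst shift c) (tsubst shift a)) (comp (tsubst shift c) (var 0))) a b H) as H1.
  norm H1. apply H1, nd_refl. Qed.

Definition Gs := [Seq1; Seq2; Seq3; Seq4; Seq5].
Definition ok G := incl Gs G.
Lemma ok_cons A G : ok G -> ok (A :: G).
Proof. unfold ok; intros H x Hx; right; auto. Qed.
Lemma ok_shift A G : ok G -> ok (A :: map (fsubst shift) G).
Proof.
  unfold ok; intros H x Hx; right.
  assert (E : fsubst shift x = x) by (simpl in Hx; intuition subst; reflexivity).
  rewrite <- E. apply in_map, H, Hx.
Qed.
Ltac okin := match goal with H : ok ?G |- In ?s ?G => apply H; simpl; tauto end.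

Definition seq_ind' (P : sequence -> Prop) (H : forall l, Forall P l -> P (node l)) : forall s, P s :=
  fix F s := match s with node l => H l ((fix g l := match l return Forall P l with
     [] => Forall_nil _ | x :: r => Forall_cons _ (F x) (g r) end) l) end.

Definition F := fun acc x => turn acc (numeral x).
Lemma numeral_node l : numeral (node l) = fold_left F l e.
Proof. simpl. generalize e. induction l; intros; simpl; auto. Qed.
Lemma numeral_snoc l a : numeral (node (l ++ [a])) = turn (numeral (node l)) (numeral a).
Proof. rewrite !numeral_node, fold_left_app. reflexivity. Qed.
Lemma numeral_closed s sg : tsubst sg (numeral s) = numeral s.
Proof.
  revert sg. induction s using seq_ind'. intro sg. rewrite numeral_node.
  assert (forall acc, tsubst sg (fold_left F l acc) = fold_left F l (tsubst sg acc)).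
  { induction H; intros; simpl; auto. rewrite IHForall. simpl. unfold F. rewrite H. auto. }
  rewrite H0. reflexivity.
Qed.

Fixpoint tsize t := match t with var _ => 1 | e => 1 | turn a b => S (tsize a + tsize b) | comp a b => S (tsize a + tsize b) end.

Lemma W1 n : forall s t, tsize (numeral s) + tsize (numeral t) < n -> s <> t -> forall G, ok G ->
  nd G (Not (Eq (numeral s) (numeral t))).
Proof.
  induction n; intros s t Hn Hst G HG; [lia|].
  destruct s as [ls], t as [lt].
  destruct ls as [|a ls] using rev_ind; destruct lt as [|b lt] using rev_ind.
  - congruence.
  - rewrite numeral_snoc. apply nd_impI. apply nd_impE with (A := Eq (turn (numeral (node lt)) (numeral b)) e).
    apply seq1_inst. right. okin.
    apply eq_sym, nd_ax; simpl; auto.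
  - rewrite numeral_snoc. apply nd_impI. apply nd_impE with (A := Eq (turn (numeral (node ls)) (numeral a)) e).
    apply seq1_inst. right. okin.
    apply nd_ax; simpl; auto.
  - rewrite !numeral_snoc in *. cbn [tsize] in Hn. apply nd_impI.
    set (G' := Eq _ _ :: G). assert (HG' : ok G') by (apply ok_cons; auto).
    assert (HA : nd G' (And (Eq (numeral (node ls)) (numeral (node lt))) (Eq (numeral a) (numeral b)))).
    { eapply nd_impE. apply seq2_inst. okin. apply nd_ax. simpl; auto. }
    destruct (classic (a = b)) as [<-|Hab].
    + assert (node ls <> node lt) by (intro Heq; inversion Heq; congruence).
      apply nd_impE with (A := Eq (numeral (node ls)) (numeral (node lt))). apply IHn; auto. lia. eapply nd_andE1; eauto.
    + apply nd_impE with (A := Eq (numeral a) (numeral b)). apply IHn; auto. lia. eapply nd_andE2; eauto.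
Qed.

Lemma W2 G l1 l2 : ok G -> nd G (WSeq2 l1 l2).
Proof.
  intro HG. unfold WSeq2. induction l2 as [|x l IH] using rev_ind.
  - rewrite app_nil_r. simpl numeral at 2. apply seq3_inst. okin.
  - rewrite app_assoc, !numeral_snoc.
    eapply eq_trans. apply seq4_inst. okin. apply cong_turn_l. exact IH.
Qed.

Lemma bigOr_intro G A L : In A L -> nd G A -> nd G (bigOr L).
Proof. induction L; simpl; intros H HA. contradiction. destruct H as [->|H].
  apply nd_orI1; auto. apply nd_orI2; auto. Qed.
Lemma bigOr_sub L1 : forall L2 G, incl L1 L2 -> nd G (bigOr L1) -> nd G (bigOr L2).
Proof.
  induction L1; simpl; intros L2 G Hi H. apply nd_botE; auto.
  apply nd_orE with (1 := H).
  - apply bigOr_intro with a. apply Hi; simpl; auto. apply nd_ax; simpl; auto.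
  - apply IHL1. intros x Hx; apply Hi; simpl; auto. apply nd_ax; simpl; auto.
Qed.
Lemma fsubst_bigOr sg x L : fsubst sg (bigOr (map (fun t => Eq x (numeral t)) L)) =
   bigOr (map (fun t => Eq (tsubst sg x) (numeral t)) L).
Proof. induction L; simpl; auto. rewrite IHL, numeral_closed. auto. Qed.

Lemma init_full l : In (node l) (init_segs (node l)).
Proof. unfold init_segs. apply in_map_iff. exists (length l). rewrite firstn_all. split; auto.
  apply in_seq. lia. Qed.
Lemma init_incl l a : incl (init_segs (node l)) (init_segs (node (l ++ [a]))).
Proof.
  unfold init_segs. intros t Ht. apply in_map_iff in Ht. destruct Ht as [k [<- Hk]]. apply in_seq in Hk.
  apply in_map_iff. exists k. rewrite firstn_app. replace (k - length l) with 0 by lia.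
  change (firstn 0 [a]) with (@nil sequence). rewrite app_nil_r. split; auto. apply in_seq. rewrite length_app. cbn [length]. lia.
Qed.

Definition D x l := bigOr (map (fun t => Eq x (numeral t)) (init_segs (node l))).

Lemma branch1 l G x y : ok G -> nd (Eq y e :: G) (Imp (Eq (comp x y) (numeral (node l))) (D x l)).
Proof.
  intro HG. apply nd_impI. apply bigOr_intro with (Eq x (numeral (node l))).
  apply (in_map (fun t => Eq x (numeral t))), init_full.
  eapply eq_trans; [|apply nd_ax; simpl; left; reflexivity].
  apply eq_sym. eapply eq_trans. apply cong_comp_r. apply nd_ax; simpl; auto.
  apply seq3_inst. right; right. okin.
Qed.

Lemma L3 l : forall G x y, ok G -> nd G (Imp (Eq (comp x y) (numeral (node l))) (D x l)).
Proof.
  induction l as [|a l IH] using rev_ind; intros G x y HG;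
  (apply nd_orE with (1 := seq5_inst G y ltac:(okin)); [apply branch1; auto|]);
  (eapply nd_exE; [apply nd_ax; simpl; left; reflexivity|]);
  (eapply nd_exE; [apply nd_ax; simpl; left; reflexivity|]);
  unfold D; cbn [fsubst tsubst]; rewrite !fsubst_bigOr, !numeral_closed;
  (match goal with |- nd (?P :: ?G') _ =>
    assert (HG' : ok (P :: G')) by (apply ok_shift, ok_shift, ok_cons, HG) end);
  apply nd_impI;
  (match goal with |- nd ((Eq (comp ?X ?Y) ?N) :: ?C) _ =>
     assert (HT : nd ((Eq (comp X Y) N) :: C) (Eq (turn (comp X (var 1)) (var 0)) N)) end);
   only 1, 3: (eapply eq_trans; [apply eq_sym, seq4_inst; right; okin|];
     eapply eq_trans; [apply eq_sym, cong_comp_r, nd_ax; simpl; auto|];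
     apply nd_ax; simpl; auto).
  - apply nd_botE. eapply nd_impE. apply seq1_inst. right; okin. exact HT.
  - rewrite numeral_snoc in *. 
    apply bigOr_sub with (L1 := map (fun t => Eq (tsubst shift (tsubst shift x)) (numeral t)) (init_segs (node l))).
    { intros t Ht. apply in_map_iff in Ht. destruct Ht as [u [<- Hu]]. apply (in_map (fun t => Eq (tsubst shift (tsubst shift x)) (numeral t))), init_incl, Hu. }
    eapply nd_impE. apply (IH _ _ (var 1)). apply ok_cons, HG'.
    eapply nd_andE1. eapply nd_impE. apply seq2_inst. right; okin. exact HT.
Qed.

Lemma W3 G s : ok G -> (forall A, In A G -> fsubst shift A = A) -> nd G (WSeq3 s).
Proof.
  intros HG Hc. destruct s as [l]. unfold WSeq3. apply nd_allI.
  assert (E : map (fsubst shift) G = G).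
  { clear HG. induction G; simpl; auto. rewrite Hc, IHG; simpl; auto. intros; apply Hc; simpl; auto. }
  rewrite E. apply nd_impI.
  eapply nd_exE; [apply nd_ax; simpl; left; reflexivity|].
  rewrite fsubst_bigOr. cbn [tsubst shift].
  eapply nd_impE. apply (L3 l _ (var 1) (var 0)). apply ok_shift, ok_cons, HG.
  apply nd_ax; simpl; left; reflexivity.
Qed.

Lemma Gs_ok : ok Gs. Proof. unfold ok; intros x H; exact H. Qed.
Lemma Gs_closed : forall A, In A Gs -> fsubst shift A = A.
Proof. intros A H; simpl in H; intuition subst; reflexivity. Qed.

Lemma weaken G A : nd G A -> forall G', incl G G' -> nd G' A.
Proof.
  induction 1; intros G' Hi; try solve [econstructor; eauto].
  - apply nd_impI. apply IHnd. apply incl_cons; simpl; auto. intros x Hx; right; auto.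
  - eapply nd_orE. apply IHnd1; auto.
    apply IHnd2. apply incl_cons; simpl; auto. intros x Hx; right; auto.
    apply IHnd3. apply incl_cons; simpl; auto. intros x Hx; right; auto.
  - apply nd_allI. apply IHnd. apply incl_map; auto.
  - eapply nd_exE. apply IHnd1; auto. apply IHnd2.
    apply incl_cons; simpl; auto. intros x Hx; right. apply (incl_map _ Hi). exact Hx.
Qed.

Fixpoint imps (G : list form) (B : form) : form :=
  match G with [] => B | A :: G' => imps G' (Imp A B) end.
Lemma to_imps G : forall B, nd G B -> nd [] (imps G B).
Proof. induction G; simpl; intros; auto. apply IHG, nd_impI, H. Qed.
Lemma from_imps G : forall B, (forall psi, In psi G -> nd Gs psi) -> nd Gs (imps G B) -> nd Gs B.
Proof.
  induction G; simpl; intros B HG H; auto.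
  apply IHG in H. eapply nd_impE; eauto. intros; apply HG; auto.
Qed.

Theorem theorem3 : forall phi : form, proves WSeqAx phi -> proves SeqAx phi.
Proof.
  intros phi [G [HW Hnd]]. exists Gs. split.
  - intros psi H; unfold SeqAx; simpl in H; intuition.
  - apply from_imps with G.
    + intros psi Hp. destruct (HW psi Hp) as [[s [t [Hst ->]]]|[[l1 [l2 ->]]|[s ->]]].
      * apply W1 with (n := S (tsize (numeral s) + tsize (numeral t))); auto using Gs_ok.
      * apply W2, Gs_ok.
      * apply W3. apply Gs_ok. apply Gs_closed.
    + apply weaken with []. apply to_imps, Hnd. intros x [].
Qed.
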